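(* Let $f\in C([0,1])$ with $f>0$, $\lambda>0$, $H_\lambda=\{a\in C([0,1]):a>\lambda \text{ on }[0,1]\}$, and $F(a)(x)=\int_0^x \frac{\int_0^z f(s)ds}{a(z)}dz$. Let $W\subset C([0,1])$ be a finite-dimensional subspace, $K\subset W\cap H_\lambda$ compact and convex, and $(Q_N)_{N\in\mathbb{N}}$ a sequence of bounded finite-rank operators $Q_N:C([0,1])\to C([0,1])$ converging strongly to the identity. Then there exist $D\in\mathbb{N}$ and $C>0$ such that $\|a_1-a_2\|_\infty\le C\|Q_D(F(a_1))-Q_D(F(a_2))\|_\infty$ for all $a_1,a_2\in K$.
   Context: $C([0,1])$ carries the supremum norm $\|\cdot\|_\infty$. *)

(* Defs.v *)
From Stdlib Require Import Reals Lra List.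
From Coquelicot Require Import Coquelicot.
Open Scope R_scope.

Definition I01 := {x : R | 0 <= x <= 1}.

Lemma clamp_in (x : R) : 0 <= Rmax 0 (Rmin x 1) <= 1.
Proof. unfold Rmax, Rmin; repeat destruct Rle_dec; lra. Qed.

Definition clamp (x : R) : I01 := exist _ (Rmax 0 (Rmin x 1)) (clamp_in x).

(* Extension of a function on [0,1] to R (constant outside); only used to
   feed Coquelicot's RInt with integrands whose values on [0,1] matter. *)
Definition ext (g : I01 -> R) : R -> R := fun x => g (clamp x).

(* g is continuous on [0,1]; C([0,1]) = {g : I01 -> R | contI g}. *)
Definition contI (g : I01 -> R) : Prop :=
  forall (x : I01) (eps : R), 0 < eps ->
    exists delta, 0 < delta /\
      forall y : I01, Rabs (proj1_sig y - proj1_sig x) < delta ->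
                      Rabs (g y - g x) < eps.

Definition supnorm (g : I01 -> R) : R :=
  real (Lub_Rbar (fun r => exists x : I01, r = Rabs (g x))).

Definition Fop (f a : I01 -> R) : I01 -> R :=
  fun x => RInt (fun z => RInt (ext f) 0 z / ext a z) 0 (proj1_sig x).

Definition H_lam (lam : R) (a : I01 -> R) : Prop :=
  contI a /\ forall x : I01, lam < a x.

Fixpoint lincomb (l : list (I01 -> R)) (c : list R) (x : I01) : R :=
  match l, c with
  | g :: l', a :: c' => a * g x + lincomb l' c' x
  | _, _ => 0
  end.

Definition subspaceC (W : (I01 -> R) -> Prop) : Prop :=
  (forall g, W g -> contI g) /\
  W (fun _ => 0) /\
  (forall g h, W g -> W h -> W (fun x => g x + h x)) /\
  (forall c g, W g -> W (fun x => c * g x)).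

Definition findim (W : (I01 -> R) -> Prop) : Prop :=
  exists l : list (I01 -> R), forall g, W g -> exists c, g = lincomb l c.

Definition open_sup (U : (I01 -> R) -> Prop) : Prop :=
  forall g, U g -> exists e, 0 < e /\
    forall h, contI h -> supnorm (fun x => h x - g x) < e -> U h.

Definition compactC (K : (I01 -> R) -> Prop) : Prop :=
  (forall g, K g -> contI g) /\
  forall (J : Type) (U : J -> (I01 -> R) -> Prop),
    (forall j, open_sup (U j)) ->
    (forall g, K g -> exists j, U j g) ->
    exists l : list J, forall g, K g -> exists j, In j l /\ U j g.

Definition convexC (K : (I01 -> R) -> Prop) : Prop :=
  forall g h t, K g -> K h -> 0 <= t <= 1 ->
    K (fun x => t * g x + (1 - t) * h x).

(* Q is a bounded linear finite-rank operator C([0,1]) -> C([0,1]).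
   Q is given on all functions I01 -> R; only its behaviour on
   continuous functions is constrained. *)
Definition bdd_finrank_op (Q : (I01 -> R) -> (I01 -> R)) : Prop :=
  (forall g, contI g -> contI (Q g)) /\
  (forall g h, contI g -> contI h -> Q (fun x => g x + h x) = (fun x => Q g x + Q h x)) /\
  (forall c g, contI g -> Q (fun x => c * g x) = (fun x => c * Q g x)) /\
  (exists M, forall g, contI g -> supnorm (Q g) <= M * supnorm g) /\
  (exists l : list (I01 -> R), forall g, contI g -> exists c, Q g = lincomb l c).

Definition strong_to_id (Q : nat -> (I01 -> R) -> (I01 -> R)) : Prop :=
  forall g, contI g -> is_lim_seq (fun N => supnorm (fun x => Q N g x - g x)) 0.

(* Main.v *)
Require Import Defs.
From Stdlib Require Import Reals Lra Lia List Classical ClassicalEpsilon FunctionalExtensionality ProofIrrelevance.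
From Coquelicot Require Import Coquelicot.
Open Scope R_scope.

Lemma clamp_id (x : I01) : clamp (proj1_sig x) = x.
Proof.
  destruct x as [x Hx]. unfold clamp.
  apply eq_sig_hprop; [intros; apply proof_irrelevance|]. simpl.
  unfold Rmax, Rmin; repeat destruct Rle_dec; lra.
Qed.

Lemma clamp_val (y : R) : 0 <= y <= 1 -> proj1_sig (clamp y) = y.
Proof. intros H; simpl; unfold Rmax, Rmin; repeat destruct Rle_dec; lra. Qed.

Lemma clamp_lip (x y : R) : Rabs (proj1_sig (clamp y) - proj1_sig (clamp x)) <= Rabs (y - x).
Proof.
  simpl. unfold Rmax, Rmin; repeat destruct Rle_dec; unfold Rabs; repeat destruct Rcase_abs; lra.
Qed.

Lemma ext_val (g : I01 -> R) (x : I01) : ext g (proj1_sig x) = g x.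
Proof. unfold ext. rewrite clamp_id. reflexivity. Qed.

Definition pt0 : I01 := clamp 0.

Definition bounded (g : I01 -> R) := exists M, forall x, Rabs (g x) <= M.

Lemma sup_ge g x : bounded g -> Rabs (g x) <= supnorm g.
Proof.
  intros [M HM]. unfold supnorm.
  destruct (Lub_Rbar_correct (fun r => exists x : I01, r = Rabs (g x))) as [Hub Hl].
  assert (Hle : Rbar_le (Lub_Rbar (fun r => exists x : I01, r = Rabs (g x))) (Finite M)).
  { apply Hl. intros r [y ->]. simpl. apply HM. }
  assert (Hge : Rbar_le (Finite (Rabs (g x))) (Lub_Rbar (fun r => exists x : I01, r = Rabs (g x)))).
  { apply Hub. exists x; reflexivity. }
  destruct (Lub_Rbar _); simpl in *; tauto.
Qed.

Lemma sup_le g M : (forall x, Rabs (g x) <= M) -> supnorm g <= M.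
Proof.
  intros HM. unfold supnorm.
  destruct (Lub_Rbar_correct (fun r => exists x : I01, r = Rabs (g x))) as [Hub Hl].
  assert (Hle : Rbar_le (Lub_Rbar (fun r => exists x : I01, r = Rabs (g x))) (Finite M)).
  { apply Hl. intros r [y ->]. simpl. apply HM. }
  assert (Hge : Rbar_le (Finite (Rabs (g pt0))) (Lub_Rbar (fun r => exists x : I01, r = Rabs (g x)))).
  { apply Hub. exists pt0; reflexivity. }
  destruct (Lub_Rbar _); simpl in *; try tauto.
Qed.

Lemma sup_nonneg g : bounded g -> 0 <= supnorm g.
Proof. intros Hb. eapply Rle_trans; [apply Rabs_pos|]. apply (sup_ge g pt0 Hb). Qed.

Lemma cont_eps (h : R -> R) x :
  (forall e, 0 < e -> exists d, 0 < d /\ forall y, Rabs (y - x) < d -> Rabs (h y - h x) < e) ->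
  continuous h x.
Proof.
  intros H. apply continuity_pt_filterlim.
  intros e He. destruct (H e He) as [d [Hd Hy]]. exists d. split; auto.
  intros y [_ Hyd]. apply Hy. exact Hyd.
Qed.

Lemma ext_cont g x : contI g -> continuous (ext g) x.
Proof.
  intros Hg. apply cont_eps. intros e He.
  destruct (Hg (clamp x) e He) as [d [Hd Hy]]. exists d; split; auto.
  intros y Hyx. unfold ext. apply Hy. eapply Rle_lt_trans; [apply clamp_lip|]. exact Hyx.
Qed.

Lemma ext_cont_pt g x : contI g -> continuity_pt (ext g) x.
Proof. intros Hg. apply continuity_pt_filterlim. apply ext_cont; auto. Qed.

Lemma contI_bounded g : contI g -> bounded g.
Proof.
  intros Hg.
  destruct (continuity_ab_maj (fun x => Rabs (ext g x)) 0 1 ltac:(lra)) as [Mx [HM _]].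
  { intros c _. apply continuity_pt_filterlim.
    apply (continuous_comp (ext g) Rabs). apply ext_cont; auto.
    apply continuity_pt_filterlim. apply Rcontinuity_abs. }
  exists (Rabs (ext g Mx)). intros x. rewrite <- ext_val. apply HM. destruct x; simpl; auto.
Qed.

Lemma cont_eps_rev (u : R -> R) y : continuous u y ->
  forall e, 0 < e -> exists d, 0 < d /\ forall z, Rabs (z - y) < d -> Rabs (u z - u y) < e.
Proof.
  intros Hc e He. apply continuity_pt_filterlim in Hc.
  destruct (Hc e He) as [d [Hd Hz]]. exists d; split; auto.
  intros z Hzy. destruct (Req_dec z y) as [->|Hne].
  - unfold Rminus. rewrite Rplus_opp_r, Rabs_R0. auto.
  - apply Hz. split; [split; [exact I| intro; apply Hne; auto]| exact Hzy].
Qed.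

Lemma contI_R (u : R -> R) : (forall y, 0 <= y <= 1 -> continuous u y) -> contI (fun x => u (proj1_sig x)).
Proof.
  intros Hu x e He. destruct (cont_eps_rev u (proj1_sig x) (Hu _ (proj2_sig x)) e He) as [d [Hd H]].
  exists d; split; [exact Hd|]. intros y Hy. apply H; exact Hy.
Qed.

Lemma contI_ext g h : (forall x, g x = h x) -> contI g -> contI h.
Proof.
  intros E Hg x e He. destruct (Hg x e He) as [d [Hd H]]. exists d; split; auto.
  intros y Hy. rewrite <- !E. auto.
Qed.

Lemma contI_ext_iff g : contI g -> contI (fun x => ext g (proj1_sig x)).
Proof. intros Hg. apply (contI_ext g); auto. intros; rewrite ext_val; auto. Qed.

Ltac contR := repeat first
  [ apply (continuous_plus (V:=R_NormedModule))
  | apply (continuous_minus (V:=R_NormedModule))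
  | apply (continuous_opp (V:=R_NormedModule))
  | apply (continuous_mult (K:=R_AbsRing))
  | apply continuous_const
  | apply continuous_id
  | (apply ext_cont; assumption) ].

Lemma contI_add g h : contI g -> contI h -> contI (fun x => g x + h x).
Proof.
  intros Hg Hh. apply (contI_ext (fun x => ext g (proj1_sig x) + ext h (proj1_sig x))).
  { intros; rewrite !ext_val; auto. }
  apply (contI_R (fun y => ext g y + ext h y)). intros y _.
  apply (continuous_plus (V:=R_NormedModule) (ext g) (ext h)); apply ext_cont; auto.
Qed.

Lemma contI_scal c g : contI g -> contI (fun x => c * g x).
Proof.
  intros Hg. apply (contI_ext (fun x => c * ext g (proj1_sig x))).
  { intros; rewrite !ext_val; auto. }
  apply (contI_R (fun y => c * ext g y)). intros y _.
  apply (continuous_mult (K:=R_AbsRing) (fun _ => c) (ext g)); [apply continuous_const| apply ext_cont; auto].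
Qed.

Lemma contI_const c : contI (fun _ => c).
Proof. intros x e He. exists 1; split; [lra|]. intros. unfold Rminus; rewrite Rplus_opp_r, Rabs_R0; auto. Qed.

Lemma contI_sub g h : contI g -> contI h -> contI (fun x => g x - h x).
Proof.
  intros Hg Hh. apply (contI_ext (fun x => g x + (-1 * h x))). intros; ring.
  apply contI_add; auto. apply contI_scal; auto.
Qed.

Lemma sup_scal c g : bounded g -> supnorm (fun x => c * g x) = Rabs c * supnorm g.
Proof.
  intros Hb. apply Rle_antisym.
  - apply sup_le. intros x. rewrite Rabs_mult. apply Rmult_le_compat_l; [apply Rabs_pos| apply sup_ge; auto].
  - destruct (Req_dec c 0) as [->|Hc].
    + rewrite Rabs_R0, Rmult_0_l. apply sup_nonneg. exists 0; intros; rewrite Rmult_0_l, Rabs_R0; lra.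
    + assert (Hb' : bounded (fun x => c * g x)).
      { destruct Hb as [M HM]. exists (Rabs c * M). intros x; rewrite Rabs_mult.
        apply Rmult_le_compat_l; [apply Rabs_pos|auto]. }
      assert (Hca : 0 < Rabs c) by (apply Rabs_pos_lt; auto).
      apply (Rmult_le_reg_l (/ Rabs c)). apply Rinv_0_lt_compat; auto.
      rewrite <- Rmult_assoc, Rinv_l, Rmult_1_l by lra.
      apply sup_le. intros x.
      apply (Rmult_le_reg_l (Rabs c)); auto.
      rewrite <- Rmult_assoc, Rinv_r, Rmult_1_l by lra.
      rewrite <- Rabs_mult. apply (sup_ge (fun x => c * g x)); auto.
Qed.

Lemma bounded_ext g h : (forall x, Rabs (g x) <= Rabs (h x)) -> bounded h -> bounded g.
Proof. intros E [M HM]. exists M. intros x. eapply Rle_trans; eauto. Qed.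

Lemma sup_zero g : bounded g -> supnorm g = 0 -> forall x, g x = 0.
Proof.
  intros Hb H0 x. pose proof (sup_ge g x Hb). rewrite H0 in H.
  pose proof (Rabs_pos (g x)). destruct (Req_dec (g x) 0); auto.
  pose proof (Rabs_pos_lt _ H2). lra.
Qed.

Section Ops.
Variable T : (I01 -> R) -> (I01 -> R).
Hypothesis HT : bdd_finrank_op T.

Lemma T_cont g : contI g -> contI (T g).
Proof. destruct HT as [H _]; auto. Qed.

Lemma T_eq g h : (forall x, g x = h x) -> T g = T h.
Proof. intros E. f_equal. apply functional_extensionality; auto. Qed.

Lemma T_scal c g x : contI g -> T (fun y => c * g y) x = c * T g x.
Proof. destruct HT as [_ [_ [H _]]]. intros Hg. rewrite H; auto. Qed.

Lemma T_add g h x : contI g -> contI h -> T (fun y => g y + h y) x = T g x + T h x.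
Proof. destruct HT as [_ [H _]]. intros Hg Hh. rewrite H; auto. Qed.

Lemma T_sub g h x : contI g -> contI h -> T (fun y => g y - h y) x = T g x - T h x.
Proof.
  intros Hg Hh. rewrite (T_eq (fun y => g y - h y) (fun y => g y + (fun z => -1 * h z) y)) by (intros; simpl; ring).
  rewrite T_add; auto. rewrite T_scal; auto. ring. apply contI_scal; auto.
Qed.

Lemma T_zero g x : contI g -> (forall y, g y = 0) -> T g x = 0.
Proof.
  intros Hg Hz. rewrite (T_eq g (fun y => 0 * g y)) by (intros; rewrite Hz; ring).
  rewrite T_scal; auto. ring.
Qed.
End Ops.

Lemma sup_eq g h : (forall x, g x = h x) -> supnorm g = supnorm h.
Proof. intros E. f_equal. apply functional_extensionality; auto. Qed.

Lemma conv_bounded (u : nat -> R) (l : R) : is_lim_seq u l -> exists B, forall n, Rabs (u n) <= B.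
Proof.
  intros Hl. apply is_lim_seq_spec in Hl.
  destruct (Hl (mkposreal 1 Rlt_0_1)) as [N0 HN0]. simpl in HN0.
  assert (Hfin : forall K, exists B, forall n, (n < K)%nat -> Rabs (u n) <= B).
  { induction K as [|K [B HB]].
    - exists 0. intros; lia.
    - exists (Rmax B (Rabs (u K))). intros n Hn.
      destruct (Nat.eq_dec n K) as [->|Hne]. apply Rmax_r.
      eapply Rle_trans; [apply HB; lia| apply Rmax_l]. }
  destruct (Hfin N0) as [B HB]. exists (Rmax B (Rabs l + 1)). intros n.
  destruct (Nat.lt_ge_cases n N0). eapply Rle_trans; [apply HB; auto| apply Rmax_l].
  eapply Rle_trans; [|apply Rmax_r]. specialize (HN0 n ltac:(lia)).
  pose proof (Rabs_triang_inv (u n) l). lra.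
Qed.

Lemma cauchy_lim (u b : nat -> R) :
  (forall k j, (k <= j)%nat -> Rabs (u j - u k) <= b k) -> is_lim_seq b 0 ->
  exists l, forall k, Rabs (l - u k) <= b k.
Proof.
  intros Hc Hb.
  assert (Hcau : ex_lim_seq_cauchy u).
  { intros eps. apply is_lim_seq_spec in Hb. destruct (Hb (mkposreal (eps/3) ltac:(destruct eps; simpl; lra))) as [N HN].
    exists N. intros n m Hn Hm. specialize (HN N (le_n _)). simpl in HN. rewrite Rminus_0_r in HN.
    pose proof (Hc N n Hn). pose proof (Hc N m Hm).
    replace (u n - u m) with ((u n - u N) - (u m - u N)) by ring.
    eapply Rle_lt_trans; [apply Rabs_triang|]. rewrite Rabs_Ropp.
    pose proof (Rle_abs (b N)). destruct eps; simpl in *; lra. }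
  apply ex_lim_seq_cauchy_corr in Hcau.
  pose proof (Lim_seq_correct' u Hcau) as Hl.
  exists (Lim_seq u). intros k.
  assert (H1 : is_lim_seq (fun j => Rabs (u (j + k)%nat - u k)) (Rabs (Lim_seq u - u k))).
  { apply (is_lim_seq_abs (fun j => u (j + k)%nat - u k) (Lim_seq u - u k)).
    apply is_lim_seq_minus'. apply (is_lim_seq_incr_n u k). auto. apply is_lim_seq_const. }
  assert (H2 := is_lim_seq_le (fun j => Rabs (u (j + k)%nat - u k)) (fun _ => b k) _ _
                  (fun j => Hc k (j + k)%nat ltac:(lia)) H1 (is_lim_seq_const (b k))).
  simpl in H2. auto.
Qed.

Lemma opnorm_ex T : bdd_finrank_op T -> exists m, 0 <= m /\
   (forall z, contI z -> supnorm (T z) <= m * supnorm z) /\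
   (forall e, e < m -> exists z, contI z /\ supnorm z <= 1 /\ e < supnorm (T z)).
Proof.
  intros HT. pose (E := fun r => exists z, contI z /\ supnorm z <= 1 /\ r = supnorm (T z)).
  destruct HT as [HTc [HTa [HTs [[M HM] HTf]]]].
  assert (HTb : bdd_finrank_op T) by (repeat split; auto; exists M; auto).
  assert (Hbd : bound E).
  { exists (Rabs M). intros r [z [Hz [Hs ->]]]. eapply Rle_trans; [apply HM; auto|].
    pose proof (sup_nonneg z (contI_bounded z Hz)).
    eapply Rle_trans; [apply Rmult_le_compat_r; [lra| apply Rle_abs]|].
    pose proof (Rabs_pos M). nra. }
  assert (Hne0 : E (supnorm (T (fun _ => 0)))).
  { exists (fun _ => 0). repeat split; auto. apply contI_const.
    apply sup_le. intros; rewrite Rabs_R0; lra. }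
  assert (Hne : exists r, E r) by (eexists; exact Hne0).
  destruct (completeness E Hbd Hne) as [m [Hub Hlub]].
  exists m. split; [|split].
  - eapply Rle_trans; [|apply Hub; exact Hne0].
    apply sup_nonneg, contI_bounded, HTc, contI_const.
  - intros z Hz. pose proof (sup_nonneg z (contI_bounded z Hz)) as Hs0.
    destruct (Req_dec (supnorm z) 0) as [H0|H0].
    + rewrite H0, Rmult_0_r. apply sup_le. intros x. rewrite (T_zero T HTb z x Hz).
      rewrite Rabs_R0; lra. apply sup_zero; auto. apply contI_bounded; auto.
    + assert (Hsp : 0 < supnorm z) by lra.
      assert (Hz' : contI (fun x => / supnorm z * z x)) by (apply contI_scal; auto).
      assert (Hin : E (supnorm (T (fun x => / supnorm z * z x)))).
      { exists (fun x => / supnorm z * z x). repeat split; auto.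
        rewrite sup_scal by (apply contI_bounded; auto). rewrite Rabs_right.
        rewrite Rinv_l; lra. left; apply Rinv_0_lt_compat; auto. }
      apply Hub in Hin.
      rewrite (sup_eq _ (fun x => / supnorm z * T z x)) in Hin by (intros; apply T_scal; auto).
      rewrite sup_scal in Hin by (apply contI_bounded, HTc; auto).
      rewrite Rabs_right in Hin by (left; apply Rinv_0_lt_compat; auto).
      apply (Rmult_le_compat_l (supnorm z)) in Hin; [|lra].
      rewrite <- Rmult_assoc, Rinv_r, Rmult_1_l in Hin by lra. lra.
  - intros e He. apply NNPP. intros Hn.
    assert (m <= e). { apply Hlub. intros r [z [Hz [Hs ->]]].
      apply Rnot_lt_le. intros Hlt. apply Hn. exists z; auto. }
    lra.
Qed.

Definition bs_step (T : (I01 -> R) -> (I01 -> R)) (z : I01 -> R) (r : R) (x : I01 -> R) : I01 -> R :=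
  if Rle_dec (r * supnorm (T z)) (supnorm (T (fun t => x t + r * z t)))
  then (fun t => x t + r * z t) else (fun t => x t - r * z t).

Lemma bs_step_props T z r x : bdd_finrank_op T -> contI x -> contI z -> supnorm z <= 1 -> 0 < r ->
  contI (bs_step T z r x) /\ (forall t, Rabs (bs_step T z r x t - x t) <= r) /\
  r * supnorm (T z) <= supnorm (T (bs_step T z r x)).
Proof.
  intros HT Hx Hz Hs Hr.
  assert (Hrz : contI (fun t => r * z t)) by (apply contI_scal; auto).
  assert (Hzb := contI_bounded z Hz).
  assert (Hbnd : forall t, Rabs (r * z t) <= r).
  { intros t. rewrite Rabs_mult, Rabs_right by lra. pose proof (sup_ge z t Hzb). nra. }
  unfold bs_step. destruct Rle_dec as [Hle|Hnle].
  - split; [apply contI_add; auto|split; auto].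
    intros t. replace (x t + r * z t - x t) with (r * z t) by ring. auto.
  - split; [apply contI_sub; auto|split].
    + intros t. replace (x t - r * z t - x t) with (- (r * z t)) by ring. rewrite Rabs_Ropp. auto.
    + apply Rnot_le_lt in Hnle.
      assert (Hp : contI (fun t => x t + r * z t)) by (apply contI_add; auto).
      assert (Hm : contI (fun t => x t - r * z t)) by (apply contI_sub; auto).
      cut (2 * (r * supnorm (T z)) <= supnorm (T (fun t => x t + r * z t)) + supnorm (T (fun t => x t - r * z t))).
      { lra. }
      assert (Hsz : 2 * r * supnorm (T z) = supnorm (fun p => 2 * r * T z p)).
      { rewrite sup_scal. rewrite Rabs_right by lra. ring. apply contI_bounded, T_cont; auto. }
      replace (2 * (r * supnorm (T z))) with (2 * r * supnorm (T z)) by ring. rewrite Hsz.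
      apply sup_le. intros p.
      assert (E : 2 * r * T z p = T (fun t => x t + r * z t) p - T (fun t => x t - r * z t) p).
      { rewrite (T_add T HT x (fun t => r * z t)) by auto.
        rewrite (T_sub T HT x (fun t => r * z t)) by auto.
        rewrite (T_scal T HT r z) by auto. ring. }
      rewrite E. eapply Rle_trans; [apply Rabs_triang|]. rewrite Rabs_Ropp.
      apply Rplus_le_compat; apply sup_ge; apply contI_bounded, T_cont; auto.
Qed.

Fixpoint bs_seq (Q : nat -> (I01 -> R) -> (I01 -> R)) (Nk : nat -> nat) (zk : nat -> I01 -> R) (k : nat) : I01 -> R :=
  match k with
  | O => fun _ => 0
  | S k => bs_step (Q (Nk (S k))) (zk (S k)) ((/3) ^ (S k)) (bs_seq Q Nk zk k)
  end.

Lemma pow3_pos n : 0 < (/3) ^ n.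
Proof. apply pow_lt. lra. Qed.

Lemma pow3_inv n : (/3) ^ n * 3 ^ n = 1.
Proof. rewrite <- Rpow_mult_distr. rewrite Rinv_l by lra. apply pow1. Qed.

Lemma lim_pow3 : is_lim_seq (fun k => (/3) ^ k / 2) 0.
Proof.
  replace (Finite 0) with (Rbar_mult 0 (/2)) by (simpl; f_equal; ring).
  apply is_lim_seq_scal_r. apply is_lim_seq_geom. rewrite Rabs_right; lra.
Qed.

Lemma pow3_small e : 0 < e -> exists k, (/3) ^ k / 2 < e.
Proof.
  intros He. pose proof lim_pow3 as H. apply is_lim_seq_spec in H.
  destruct (H (mkposreal e He)) as [N HN]. exists N. specialize (HN N (le_n _)). simpl in HN.
  rewrite Rminus_0_r in HN. pose proof (Rle_abs ((/3)^N/2)). lra.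
Qed.

Lemma unif_bound (Q : nat -> (I01 -> R) -> (I01 -> R)) :
  (forall N, bdd_finrank_op (Q N)) -> strong_to_id Q ->
  exists M, forall N g, contI g -> supnorm (Q N g) <= M * supnorm g.
Proof.
  intros hQ hQs. apply NNPP. intros Hn.
  pose (mN := fun N => proj1_sig (constructive_indefinite_description _ (opnorm_ex (Q N) (hQ N)))).
  assert (HmN : forall N, 0 <= mN N /\
   (forall z, contI z -> supnorm (Q N z) <= mN N * supnorm z) /\
   (forall e, e < mN N -> exists z, contI z /\ supnorm z <= 1 /\ e < supnorm (Q N z))).
  { intros N. exact (proj2_sig (constructive_indefinite_description _ (opnorm_ex (Q N) (hQ N)))). }
  assert (Hunb : forall B, exists N, B < mN N).
  { intros B. apply NNPP. intros Hb. apply Hn. exists B. intros N g Hg.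
    assert (mN N <= B) by (apply Rnot_lt_le; intros Hl; apply Hb; exists N; auto).
    eapply Rle_trans; [apply HmN; auto|]. apply Rmult_le_compat_r; auto.
    apply sup_nonneg, contI_bounded; auto. }
  assert (Hch : forall k : nat, exists p : nat * (I01 -> R),
     6 * 3 ^ k * (INR k + 1) < mN (fst p) /\ contI (snd p) /\ supnorm (snd p) <= 1 /\
     2/3 * mN (fst p) < supnorm (Q (fst p) (snd p))).
  { intros k. destruct (Hunb (6 * 3 ^ k * (INR k + 1))) as [N HN].
    assert (0 < 6 * 3 ^ k * (INR k + 1)).
    { pose proof (pos_INR k). pose proof (pow_lt 3 k ltac:(lra)). nra. }
    destruct (proj2 (proj2 (HmN N)) (2/3 * mN N)) as [z [Hz [Hs Hl]]]; [lra|].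
    exists (N, z). simpl. auto. }
  pose (pk := fun k => proj1_sig (constructive_indefinite_description _ (Hch k))).
  assert (Hpk : forall k, 6 * 3 ^ k * (INR k + 1) < mN (fst (pk k)) /\ contI (snd (pk k)) /\
     supnorm (snd (pk k)) <= 1 /\ 2/3 * mN (fst (pk k)) < supnorm (Q (fst (pk k)) (snd (pk k)))).
  { intros k. exact (proj2_sig (constructive_indefinite_description _ (Hch k))). }
  pose (Nk := fun k => fst (pk k)). pose (zk := fun k => snd (pk k)).
  pose (xs := bs_seq Q Nk zk).
  assert (Hstep : forall k, contI (xs k) -> contI (xs (S k)) /\ (forall t, Rabs (xs (S k) t - xs k t) <= (/3)^(S k)) /\
      (/3)^(S k) * supnorm (Q (Nk (S k)) (zk (S k))) <= supnorm (Q (Nk (S k)) (xs (S k)))).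
  { intros k Hk. apply bs_step_props; auto; try apply Hpk. apply pow3_pos. }
  assert (Hxc : forall k, contI (xs k)).
  { induction k. apply contI_const. apply Hstep; auto. }
  assert (Hcau : forall t k i, Rabs (xs (i + k)%nat t - xs k t) <= (/3)^k/2 - (/3)^(i+k)/2).
  { intros t k i. induction i.
    - simpl. unfold Rminus. rewrite Rplus_opp_r, Rabs_R0. lra.
    - replace (xs (S i + k)%nat t - xs k t) with ((xs (S (i + k)) t - xs (i + k)%nat t) + (xs (i + k)%nat t - xs k t)) by (simpl; ring).
      eapply Rle_trans; [apply Rabs_triang|].
      pose proof (proj1 (proj2 (Hstep (i + k)%nat (Hxc _))) t).
      replace (S i + k)%nat with (S (i + k)) by lia. simpl pow in *. lra. }
  assert (HX : forall t, exists l, forall k, Rabs (l - xs k t) <= (/3)^k/2).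
  { intros t. apply cauchy_lim; [|apply lim_pow3].
    intros k j Hkj. replace j with ((j - k) + k)%nat by lia.
    pose proof (Hcau t k (j - k)%nat). pose proof (pow3_pos ((j - k) + k)). lra. }
  pose (X := fun t => proj1_sig (constructive_indefinite_description _ (HX t))).
  assert (HXk : forall t k, Rabs (X t - xs k t) <= (/3)^k/2).
  { intros t. exact (proj2_sig (constructive_indefinite_description _ (HX t))). }
  assert (HXc : contI X).
  { intros x e He. destruct (pow3_small (e/3)) as [k Hk]; [lra|].
    destruct (Hxc k x (e/3)) as [d [Hd Hy]]; [lra|]. exists d; split; auto.
    intros y Hyx. specialize (Hy y Hyx). pose proof (HXk y k). pose proof (HXk x k).
    replace (X y - X x) with ((X y - xs k y) + (xs k y - xs k x) - (X x - xs k x)) by ring.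
    eapply Rle_lt_trans; [apply Rabs_triang|]. rewrite Rabs_Ropp.
    eapply Rle_lt_trans; [apply Rplus_le_compat_r, Rabs_triang|]. lra. }
  destruct (conv_bounded _ _ (hQs X HXc)) as [B HB].
  assert (HQX : forall N, supnorm (Q N X) <= B + supnorm X).
  { intros N. apply sup_le. intros p.
    assert (Hb1 : bounded (fun x => Q N X x - X x)) by (apply contI_bounded, contI_sub; auto; apply (T_cont _ (hQ N)); auto).
    pose proof (sup_ge _ p Hb1). pose proof (sup_ge X p (contI_bounded X HXc)).
    specialize (HB N). pose proof (Rle_abs (supnorm (fun x => Q N X x - X x))).
    replace (Q N X p) with ((Q N X p - X p) + X p) by ring.
    eapply Rle_trans; [apply Rabs_triang|]. lra. }
  destruct (INR_unbounded (B + supnorm X)) as [k Hk].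
  set (N := Nk (S k)). set (r := (/3)^(S k)).
  assert (Hr : 0 < r) by apply pow3_pos.
  destruct (Hpk (S k)) as [Hbig [Hzc [Hzs Hz23]]]. fold (Nk (S k)) (zk (S k)) in *. fold N in Hbig, Hz23.
  destruct (Hstep k (Hxc k)) as [_ [_ Hq]]. fold N r in Hq.
  destruct (HmN N) as [HmN0 [HmN1 _]].
  pose (D := fun t => X t - xs (S k) t).
  assert (HDc : contI D) by (apply contI_sub; auto).
  assert (HDs : supnorm D <= r / 2) by (apply sup_le; intros t; apply HXk).
  assert (HQD : supnorm (Q N D) <= mN N * (r / 2)).
  { eapply Rle_trans; [apply HmN1; auto|]. apply Rmult_le_compat_l; auto. }
  assert (Htri : supnorm (Q N (xs (S k))) <= supnorm (Q N X) + supnorm (Q N D)).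
  { apply sup_le. intros p.
    replace (Q N (xs (S k)) p) with (Q N X p - (Q N X p - Q N (xs (S k)) p)) by ring.
    eapply Rle_trans; [apply Rabs_triang|]. rewrite Rabs_Ropp.
    assert (Hd : Rabs (Q N X p - Q N (xs (S k)) p) <= supnorm (Q N D)).
    { unfold D. rewrite <- (T_sub _ (hQ N)) by auto. apply sup_ge, contI_bounded, (T_cont _ (hQ N)); auto. }
    pose proof (sup_ge (Q N X) p (contI_bounded _ (T_cont _ (hQ N) X HXc))). lra. }
  assert (Hr3 : r * (6 * 3 ^ S k * (INR (S k) + 1)) = 6 * (INR (S k) + 1)).
  { unfold r. replace ((/3)^S k * (6 * 3^S k * (INR (S k)+1))) with (((/3)^S k * 3^S k) * (6 * (INR (S k) + 1))) by ring.
    rewrite pow3_inv. ring. }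
  rewrite S_INR in Hr3. specialize (HQX N).
  assert (r * (2/3 * mN N) <= r * supnorm (Q N (zk (S k)))) by (apply Rmult_le_compat_l; lra).
  assert (r * (6 * 3 ^ S k * (INR (S k) + 1)) <= r * mN N) by (apply Rmult_le_compat_l; lra).
  rewrite S_INR in H0. lra.
Qed.

Definition incr (psi : nat -> nat) := forall n, (psi n < psi (S n))%nat.

Lemma incr_mono psi : incr psi -> forall m n, (m < n)%nat -> (psi m < psi n)%nat.
Proof.
  intros H m n Hmn. induction n. lia.
  destruct (Nat.eq_dec m n) as [->|]. apply H. specialize (IHn ltac:(lia)). specialize (H n). lia.
Qed.

Lemma incr_ge psi : incr psi -> forall n, (n <= psi n)%nat.
Proof. intros H n. induction n. lia. specialize (H n). lia. Qed.

Lemma incr_comp p1 p2 : incr p1 -> incr p2 -> incr (fun n => p1 (p2 n)).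
Proof. intros H1 H2 n. apply incr_mono; auto. Qed.

Lemma inv_small e : 0 < e -> exists N, forall n, (N <= n)%nat -> / INR (S n) < e.
Proof.
  intros He. destruct (INR_unbounded (/ e)) as [N HN]. exists N. intros n Hn.
  assert (INR N <= INR n) by (apply le_INR; auto).
  rewrite S_INR. apply (Rmult_lt_reg_l (INR n + 1)). pose proof (pos_INR n); lra.
  rewrite Rinv_r by (pose proof (pos_INR n); lra).
  apply (Rmult_lt_reg_l (/ e)). apply Rinv_0_lt_compat; auto.
  rewrite Rmult_1_r, (Rmult_comm (INR n + 1)), <- Rmult_assoc, Rinv_l, Rmult_1_l by lra. lra.
Qed.

Lemma extract (d : nat -> R) : (forall e, 0 < e -> forall N, exists n, (N <= n)%nat /\ d n < e) ->
  exists psi, incr psi /\ forall n, d (psi n) < / INR (S n).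
Proof.
  intros H.
  assert (H' : forall N k, exists n, (N <= n)%nat /\ d n < / INR (S k)).
  { intros N k. apply H. apply Rinv_0_lt_compat. apply lt_0_INR. lia. }
  pose (nx := fun N k => proj1_sig (constructive_indefinite_description _ (H' N k))).
  assert (Hnx : forall N k, (N <= nx N k)%nat /\ d (nx N k) < / INR (S k)).
  { intros N k. exact (proj2_sig (constructive_indefinite_description _ (H' N k))). }
  pose (psi := fix f n := match n with O => nx O O | S m => nx (S (f m)) (S m) end).
  exists psi. split.
  - intros n. simpl. pose proof (Hnx (S (psi n)) (S n)). lia.
  - intros [|n]; simpl; apply Hnx.
Qed.

Lemma lim_of_inv (w : nat -> R) l : (forall n, Rabs (w n - l) < / INR (S n)) -> is_lim_seq w l.
Proof.
  intros H. apply is_lim_seq_spec. intros [e He]. destruct (inv_small e He) as [N HN].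
  exists N. intros n Hn. simpl. eapply Rlt_trans; [apply H| apply HN; auto].
Qed.

Lemma BW1 (v : nat -> R) B : (forall n, Rabs (v n) <= B) ->
  exists psi (l : R), incr psi /\ is_lim_seq (fun n => v (psi n)) l.
Proof.
  intros HB. destruct (Bolzano_Weierstrass v (fun c => -B <= c <= B) (compact_P3 (-B) B)) as [l Hl].
  { intros n. specialize (HB n). revert HB. unfold Rabs; destruct Rcase_abs; intros; split; lra. }
  destruct (extract (fun n => Rabs (v n - l))) as [psi [Hi Hp]].
  { intros e He N. destruct (Hl (disc l (mkposreal e He)) N) as [p [Hp Hv]].
    exists (mkposreal e He). intros x Hx; exact Hx. exists p; split; auto. }
  exists psi, l. split; auto. apply lim_of_inv; auto.
Qed.

Lemma multi_BW (ps : list (I01 * (I01 -> R))) (u : nat -> I01 -> R) B :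
  (forall n x, Rabs (u n x) <= B) ->
  exists psi, incr psi /\ forall p, In p ps -> ex_finite_lim_seq (fun n => u (psi n) (fst p)).
Proof.
  intros HB. induction ps as [|p ps IH].
  - exists (fun n => n). split. intros n; lia. intros p [].
  - destruct IH as [psi1 [Hi1 Hl1]].
    destruct (BW1 (fun n => u (psi1 n) (fst p)) B) as [psi2 [l [Hi2 Hl2]]]; [intros; apply HB|].
    exists (fun n => psi1 (psi2 n)). split. apply incr_comp; auto.
    intros q [<-|Hq].
    + exists l. exact Hl2.
    + destruct (Hl1 q Hq) as [l' Hl']. exists l'.
      apply (is_lim_seq_subseq (fun n => u (psi1 n) (fst q)) l' psi2); auto. apply eventually_subseq; auto.
Qed.

Lemma lims_eventually (ps : list (I01 * (I01 -> R))) (s : I01 -> nat -> R) (l : I01 -> R) :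
  (forall p, In p ps -> is_lim_seq (s (fst p)) (l (fst p))) ->
  forall e, 0 < e -> exists N0, forall n, (N0 <= n)%nat -> forall p, In p ps -> Rabs (s (fst p) n - l (fst p)) < e.
Proof.
  intros H e He. induction ps as [|p ps IH].
  - exists O. intros n _ p [].
  - destruct IH as [N1 HN1]. intros q Hq; apply H; right; auto.
    assert (Hp := H p (or_introl eq_refl)). apply is_lim_seq_spec in Hp.
    destruct (Hp (mkposreal e He)) as [N2 HN2].
    exists (max N1 N2). intros n Hn q [<-|Hq].
    + apply HN2. lia.
    + apply HN1; auto. lia.
Qed.

Fixpoint sumI (ps : list (I01 * (I01 -> R))) (g : I01 -> R) (x : I01) : R :=
  match ps with
  | nil => 0
  | p :: ps' => g (fst p) * snd p x + sumI ps' g x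
  end.

Definition spanl l (g : I01 -> R) := exists c, forall x, g x = lincomb l c x.
Definition subsp (V : (I01 -> R) -> Prop) :=
  (forall g, V g -> contI g) /\ (forall g h, V g -> V h -> V (fun x => g x + h x)) /\
  (forall c g, V g -> V (fun x => c * g x)).

Lemma lincomb_nil l x : lincomb l nil x = 0.
Proof. destruct l; reflexivity. Qed.

Lemma lincomb_map l e x1 c x :
  lincomb (map (fun h => fun y => h y - h x1 / e x1 * e y) l) c x = lincomb l c x - lincomb l c x1 / e x1 * e x.
Proof.
  revert c. induction l as [|h l IH]; intros [|a c]; simpl; try (unfold Rdiv; ring).
  rewrite IH. unfold Rdiv; ring.
Qed.

Lemma span_remove l e x1 : In e l -> e x1 <> 0 -> exists l', length l' = pred (length l) /\
  forall c, exists c', forall x, lincomb l c x - lincomb l c x1 / e x1 * e x = lincomb l' c' x.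
Proof.
  intros Hin Hne. induction l as [|e0 l0 IH]; [destruct Hin|].
  destruct Hin as [->|Hin].
  - exists (map (fun h => fun y => h y - h x1 / e x1 * e y) l0). split. rewrite length_map; reflexivity.
    intros [|a c].
    + exists nil. intros x; rewrite !lincomb_nil; unfold Rdiv; ring.
    + exists c. intros x. rewrite lincomb_map. simpl. field. auto.
  - destruct (IH Hin) as [l0' [Hlen Hc]].
    exists ((fun y => e0 y - e0 x1 / e x1 * e y) :: l0'). split.
    { simpl. rewrite Hlen. destruct l0; [destruct Hin|]. reflexivity. }
    intros [|a c].
    + exists nil. intros x; rewrite !lincomb_nil; unfold Rdiv; ring.
    + destruct (Hc c) as [c' Hc']. exists (a :: c'). intros x. simpl. rewrite <- Hc'. unfold Rdiv; ring.
Qed.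

Lemma lincomb_nz l c x1 : lincomb l c x1 <> 0 -> exists e, In e l /\ e x1 <> 0.
Proof.
  revert c. induction l as [|h l IH]; intros [|a c]; simpl; try lra.
  intros H. destruct (Req_dec (h x1) 0) as [H0|H0].
  - destruct (IH c) as [e [He1 He2]]. rewrite H0 in H. lra. exists e; auto.
  - exists h; auto.
Qed.

Lemma sumI_cont ps g : (forall p, In p ps -> contI (snd p)) -> contI (sumI ps g).
Proof.
  induction ps as [|p ps IH]; intros H; simpl.
  - apply contI_const.
  - apply (contI_add (fun x => g (fst p) * snd p x) (sumI ps g)).
    + apply contI_scal. apply H. left; reflexivity.
    + apply IH. intros q Hq. apply H. right; exact Hq.
Qed.

Lemma sumI_lin ps g h c x : sumI ps (fun y => g y + c * h y) x = sumI ps g x + c * sumI ps h x.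
Proof. induction ps; simpl; [ring|]. rewrite IHps. ring. Qed.

Lemma interp n : forall l V, length l = n -> subsp V -> (forall g, V g -> spanl l g) ->
  exists ps, (forall p, In p ps -> contI (snd p)) /\ forall g, V g -> forall x, g x = sumI ps g x.
Proof.
  induction n as [|n IH]; intros l V Hlen [Vc [Va Vs]] Hsp.
  - exists nil. split. intros p []. intros g Hg x. destruct (Hsp g Hg) as [c Hc].
    rewrite Hc. destruct l; [|discriminate]. simpl. reflexivity.
  - destruct (classic (forall g, V g -> forall x, g x = 0)) as [Hz|Hnz].
    { exists nil. split. intros p []. intros g Hg x. simpl. auto. }
    apply not_all_ex_not in Hnz. destruct Hnz as [g1 Hg1].
    apply imply_to_and in Hg1. destruct Hg1 as [Vg1 Hg1]. apply not_all_ex_not in Hg1.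
    destruct Hg1 as [x1 Hx1].
    pose (u1 := fun x => / g1 x1 * g1 x).
    assert (Vu1 : V u1) by (apply Vs; auto).
    assert (Hu1 : u1 x1 = 1) by (unfold u1; field; auto).
    destruct (Hsp g1 Vg1) as [c1 Hc1].
    destruct (lincomb_nz l c1 x1) as [e [Hine Hex]]. rewrite <- Hc1; auto.
    destruct (span_remove l e x1 Hine Hex) as [l' [Hlen' Hrem]].
    pose (V' := fun g => V g /\ g x1 = 0).
    destruct (IH l' V') as [ps' [Hps'c Hps']].
    + rewrite Hlen', Hlen. reflexivity.
    + split; [|split].
      * intros g [Vg _]; auto.
      * intros g h [Vg Hg] [Vh Hh]. split; auto. rewrite Hg, Hh; ring.
      * intros c g [Vg Hg]. split; auto. rewrite Hg; ring.
    + intros g [Vg Hg0]. destruct (Hsp g Vg) as [c Hc]. destruct (Hrem c) as [c' Hc'].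
      exists c'. intros x. rewrite <- Hc', <- !Hc, Hg0. unfold Rdiv; ring.
    + exists ((x1, fun x => u1 x - sumI ps' u1 x) :: ps'). split.
      * intros p [<-|Hp]; auto. simpl. apply contI_sub. apply Vc; auto. apply sumI_cont; auto.
      * intros g Vg x. simpl.
        assert (Hw : V' (fun y => g y + (- g x1) * u1 y)).
        { split. apply Va; auto. rewrite Hu1. ring. }
        pose proof (Hps' _ Hw x) as Hx. rewrite sumI_lin in Hx.
        lra.
Qed.

Lemma sumI_bound ps : (forall p, In p ps -> contI (snd p)) -> exists K, 0 <= K /\
  forall g d x, 0 <= d -> (forall p, In p ps -> Rabs (g (fst p)) <= d) -> Rabs (sumI ps g x) <= d * K.
Proof.
  induction ps as [|p ps IH]; intros Hc.
  - exists 0. split; [lra|]. intros; simpl; rewrite Rabs_R0; lra.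
  - destruct IH as [K [HK HK']]. intros; apply Hc; right; auto.
    destruct (contI_bounded (snd p) (Hc p (or_introl eq_refl))) as [Mp HMp].
    assert (0 <= Mp) by (eapply Rle_trans; [apply Rabs_pos| apply (HMp pt0)]).
    exists (Mp + K). split; [lra|]. intros g d x Hd Hg. simpl.
    eapply Rle_trans; [apply Rabs_triang|]. rewrite Rabs_mult.
    assert (Rabs (g (fst p)) * Rabs (snd p x) <= d * Mp).
    { apply Rmult_le_compat; try apply Rabs_pos. apply Hg; left; reflexivity. apply HMp. }
    assert (Rabs (sumI ps g x) <= d * K) by (apply HK'; auto; intros q Hq; apply Hg; right; exact Hq).
    lra.
Qed.

Definition unif (u : nat -> I01 -> R) (U : I01 -> R) :=
  forall e, 0 < e -> exists N0, forall n, (N0 <= n)%nat -> forall x, Rabs (u n x - U x) <= e.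

Lemma fd_compact l V (u : nat -> I01 -> R) B : subsp V -> (forall g, V g -> spanl l g) ->
  (forall n, V (u n)) -> (forall n x, Rabs (u n x) <= B) ->
  exists psi H, incr psi /\ contI H /\ unif (fun n => u (psi n)) H.
Proof.
  intros HV Hsp Hu HB.
  destruct (interp (length l) l V eq_refl HV Hsp) as [ps [Hpc Hps]].
  destruct (multi_BW ps u B HB) as [psi [Hi Hl]].
  pose (cf := fun y => Lim_seq (fun n => u (psi n) y)).
  exists psi, (sumI ps cf). split; auto. split. apply sumI_cont; auto.
  destruct (sumI_bound ps Hpc) as [K [HK HK']].
  intros e He.
  destruct (lims_eventually ps (fun y n => u (psi n) y) cf) with (e := e / (K + 1)) as [N0 HN0].
  { intros p Hp. unfold cf. apply Lim_seq_correct'. auto. }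
  { apply Rdiv_lt_0_compat; lra. }
  exists N0. intros n Hn x.
  assert (E : u (psi n) x - sumI ps cf x = sumI ps (fun y => u (psi n) y + (-1) * cf y) x).
  { rewrite sumI_lin. rewrite <- (Hps _ (Hu (psi n))). ring. }
  rewrite E. eapply Rle_trans. apply (HK' _ (e / (K + 1))).
  { left; apply Rdiv_lt_0_compat; lra. }
  { intros p Hp. left. replace (u (psi n) (fst p) + -1 * cf (fst p)) with (u (psi n) (fst p) - cf (fst p)) by ring.
    apply HN0; auto. }
  apply Rle_trans with (e / (K+1) * (K+1)).
  apply Rmult_le_compat_l; [left; apply Rdiv_lt_0_compat; lra| lra]. right; field; lra.
Qed.

Lemma sup_tri3 g h k : bounded g -> bounded h -> (forall x, k x = g x + h x) -> supnorm k <= supnorm g + supnorm h.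
Proof.
  intros Hg Hh E. apply sup_le. intros x. rewrite E. eapply Rle_trans; [apply Rabs_triang|].
  apply Rplus_le_compat; apply sup_ge; auto.
Qed.

Lemma list_max {J} (l : list J) (f : J -> nat) : exists N, forall j, In j l -> (f j <= N)%nat.
Proof.
  induction l as [|j l [N HN]]. exists O; intros j [].
  exists (max (f j) N). intros i [<-|Hi]. lia. specialize (HN i Hi). lia.
Qed.

Lemma K_cluster K (a : nat -> I01 -> R) : compactC K -> (forall n, K (a n)) ->
  exists A, K A /\ forall e, 0 < e -> forall N, exists n, (N <= n)%nat /\ supnorm (fun x => a n x - A x) < e.
Proof.
  intros [Kc Hcov] Ha. apply NNPP. intros Hn.
  assert (H : forall j : {A | K A}, exists p : R * nat, 0 < fst p /\
             forall n, (snd p <= n)%nat -> fst p <= supnorm (fun x => a n x - proj1_sig j x)).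
  { intros [A KA]. simpl. apply NNPP. intros Hn2. apply Hn. exists A. split; auto.
    intros e He N. apply NNPP. intros Hn3. apply Hn2. exists (e, N). simpl. split; auto.
    intros n Hn4. apply Rnot_lt_le. intros Hlt. apply Hn3. exists n; auto. }
  pose (pj := fun j => proj1_sig (constructive_indefinite_description _ (H j))).
  assert (Hpj : forall j, 0 < fst (pj j) /\ forall n, (snd (pj j) <= n)%nat -> fst (pj j) <= supnorm (fun x => a n x - proj1_sig j x)).
  { intros j. exact (proj2_sig (constructive_indefinite_description _ (H j))). }
  pose (U := fun (j : {A | K A}) h => contI h /\ supnorm (fun x => h x - proj1_sig j x) < fst (pj j)).
  destruct (Hcov {A | K A} U) as [l Hl].
  - intros j h [Hh Hlt]. exists (fst (pj j) - supnorm (fun x => h x - proj1_sig j x)). split; [lra|].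
    intros h' Hh' Hlt'. split; auto.
    assert (Kj := Kc _ (proj2_sig j)).
    eapply Rle_lt_trans. apply (sup_tri3 (fun x => h' x - h x) (fun x => h x - proj1_sig j x)).
    apply contI_bounded, contI_sub; auto. apply contI_bounded, contI_sub; auto.
    intros; ring. lra.
  - intros g Kg. exists (exist _ g Kg). split. apply Kc; auto. simpl.
    eapply Rle_lt_trans; [|apply (Hpj (exist _ g Kg))]. apply sup_le. intros x. unfold Rminus.
    rewrite Rplus_opp_r, Rabs_R0; lra.
  - destruct (list_max l (fun j => snd (pj j))) as [N HN].
    destruct (Hl (a N) (Ha N)) as [j [Hj [_ Hlt]]].
    pose proof (proj2 (Hpj j) N (HN j Hj)). lra.
Qed.

Lemma K_seq K (a : nat -> I01 -> R) : compactC K -> (forall n, K (a n)) ->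
  exists psi A, incr psi /\ K A /\ unif (fun n => a (psi n)) A.
Proof.
  intros HK Ha. destruct (K_cluster K a HK Ha) as [A [KA Hcl]].
  destruct (extract (fun n => supnorm (fun x => a n x - A x)) Hcl) as [psi [Hi Hp]].
  exists psi, A. split; auto. split; auto.
  intros e He. destruct (inv_small e He) as [N HN]. exists N. intros n Hn x.
  left. eapply Rle_lt_trans; [|apply (HN n Hn)].
  eapply Rle_trans; [|left; apply (Hp n)].
  apply (sup_ge (fun x => a (psi n) x - A x)). apply contI_bounded, contI_sub; apply (proj1 HK); auto.
Qed.

Lemma cR_mult (u v : R -> R) z : continuous u z -> continuous v z -> continuous (fun y => u y * v y) z.
Proof. intros. exact (continuous_mult (K:=R_AbsRing) u v z H H0). Qed.
Lemma cR_opp (u : R -> R) z : continuous u z -> continuous (fun y => - u y) z.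
Proof. intros. exact (continuous_opp (V:=R_NormedModule) u z H). Qed.
Lemma cR_inv (u : R -> R) z : continuous u z -> u z <> 0 -> continuous (fun y => / u y) z.
Proof. intros. exact (continuous_Rinv_comp u z H H0). Qed.

Lemma exR (k : R -> R) a b : (forall z, continuous k z) -> ex_RInt k a b.
Proof. intros H. apply (ex_RInt_continuous (V:=R_CompleteNormedModule)). intros; auto. Qed.

Lemma RInt_diff (k : R -> R) x y M : (forall z, continuous k z) ->
  (forall z, Rmin x y <= z <= Rmax x y -> Rabs (k z) <= M) ->
  Rabs (RInt k 0 y - RInt k 0 x) <= M * Rabs (y - x).
Proof.
  intros Hc HM.
  assert (E : RInt k 0 y - RInt k 0 x = RInt k x y).
  { rewrite <- (RInt_Chasles k 0 x y) by (apply exR; auto). unfold plus; simpl. ring. }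
  rewrite E. destruct (Rle_dec x y) as [Hxy|Hxy].
  - rewrite (Rabs_right (y - x)) by lra. rewrite Rmult_comm. apply abs_RInt_le_const; auto. apply exR; auto.
    intros t Ht. apply HM. rewrite Rmin_left, Rmax_right by lra. lra.
  - rewrite <- (opp_RInt_swap k y x) by (apply exR; auto). unfold opp; simpl. rewrite Rabs_Ropp.
    rewrite (Rabs_left (y - x)) by lra. replace (- (y - x)) with (x - y) by ring. rewrite Rmult_comm.
    apply abs_RInt_le_const; try lra. apply exR; auto.
    intros t Ht. apply HM. rewrite Rmin_right, Rmax_left by lra. lra.
Qed.

Lemma contI_RInt (k : R -> R) M : (forall z, continuous k z) -> (forall z, 0 <= z <= 1 -> Rabs (k z) <= M) ->
  contI (fun x => RInt k 0 (proj1_sig x)).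
Proof.
  intros Hc HM x e He.
  assert (HM0 : 0 <= M) by (eapply Rle_trans; [apply Rabs_pos| apply (HM 0); lra]).
  exists (e / (M + 1)). split. apply Rdiv_lt_0_compat; lra.
  intros y Hy. eapply Rle_lt_trans. apply (RInt_diff k _ _ M); auto.
  { intros z Hz. apply HM. destruct x as [x Hx], y as [y Hy']. simpl in *.
    unfold Rmin, Rmax in Hz; repeat destruct Rle_dec in Hz; lra. }
  apply Rle_lt_trans with (M * (e / (M + 1))). apply Rmult_le_compat_l; auto. left; auto.
  apply Rlt_le_trans with ((M+1) * (e / (M + 1))). apply Rmult_lt_compat_r. apply Rdiv_lt_0_compat; lra. lra.
  right; field; lra.
Qed.

Definition Gf (f : I01 -> R) z := RInt (ext f) 0 z.

Definition ker (f hh b1 b2 : I01 -> R) z := - (Gf f z * ext hh z) / (ext b1 z * ext b2 z).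

Section Integ.
Variable f : I01 -> R.
Hypothesis hf : contI f.
Hypothesis hfpos : forall x, 0 < f x.
Variable fM : R.
Hypothesis hfM : forall x, Rabs (f x) <= fM.

Lemma fM_nonneg : 0 <= fM.
Proof. eapply Rle_trans; [apply Rabs_pos| apply (hfM pt0)]. Qed.

Lemma G_cont z : continuous (Gf f) z.
Proof.
  apply cont_eps. intros e He. pose proof fM_nonneg.
  exists (e / (fM + 1)). split. apply Rdiv_lt_0_compat; lra.
  intros y Hy. eapply Rle_lt_trans. apply (RInt_diff (ext f) z y fM).
  intros; apply ext_cont; auto. intros; apply hfM.
  apply Rle_lt_trans with (fM * (e / (fM + 1))). apply Rmult_le_compat_l; auto. left; auto.
  apply Rlt_le_trans with ((fM+1) * (e / (fM + 1))). apply Rmult_lt_compat_r. apply Rdiv_lt_0_compat; lra. lra.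
  right; field; lra.
Qed.

Lemma G_bound z : 0 <= z <= 1 -> Rabs (Gf f z) <= fM.
Proof.
  intros Hz. unfold Gf. eapply Rle_trans. apply abs_RInt_le_const; try lra. apply exR; intros; apply ext_cont; auto.
  intros; apply hfM. pose proof fM_nonneg. nra.
Qed.

Lemma G_pos z : 0 < z -> 0 < Gf f z.
Proof.
  intros Hz. unfold Gf. apply RInt_gt_0; auto. intros; apply hfpos. intros; apply ext_cont; auto.
Qed.

Lemma ker_cont hh b1 b2 lam : 0 < lam -> contI hh -> contI b1 -> contI b2 -> (forall x, lam < b1 x) -> (forall x, lam < b2 x) ->
  forall z, continuous (ker f hh b1 b2) z.
Proof.
  intros Hl Hh Hb1 Hb2 Hp1 Hp2 z. unfold ker, Rdiv.
  apply cR_mult. apply cR_opp. apply cR_mult. apply G_cont. apply ext_cont; auto.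
  apply cR_inv. apply cR_mult; apply ext_cont; auto.
  unfold ext. specialize (Hp1 (clamp z)). specialize (Hp2 (clamp z)). nra.
Qed.

Lemma Fint_cont a lam : 0 < lam -> contI a -> (forall x, lam < a x) -> forall z, continuous (fun z => Gf f z / ext a z) z.
Proof.
  intros Hl Ha Hp z. unfold Rdiv. apply cR_mult. apply G_cont. apply cR_inv. apply ext_cont; auto.
  unfold ext. specialize (Hp (clamp z)). lra.
Qed.

Lemma Fop_cont a lam : 0 < lam -> contI a -> (forall x, lam < a x) -> contI (Fop f a).
Proof.
  intros Hl Ha Hp. unfold Fop. apply (contI_RInt _ (fM / lam)). apply (Fint_cont a lam); auto.
  intros z Hz. unfold Rdiv. rewrite Rabs_mult. apply Rmult_le_compat. apply Rabs_pos. apply Rabs_pos.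
  apply G_bound; auto. unfold ext. specialize (Hp (clamp z)).
  rewrite Rabs_inv, Rabs_right by lra. apply Rinv_le_contravar; lra.
Qed.

End Integ.

Lemma diff_formula f a1 a2 lam c : 0 < lam -> contI f -> contI a1 -> contI a2 ->
  (forall x, lam < a1 x) -> (forall x, lam < a2 x) ->
  forall x, c * (Fop f a1 x - Fop f a2 x) = RInt (ker f (fun y => c * (a1 y - a2 y)) a1 a2) 0 (proj1_sig x).
Proof.
  intros Hl Hf Ha1 Ha2 Hp1 Hp2 x. unfold Fop. set (y := proj1_sig x).
  destruct (contI_bounded f Hf) as [fM HfM].
  assert (E1 := exR _ 0 y (Fint_cont f Hf fM HfM a1 lam Hl Ha1 Hp1)).
  assert (E2 := exR _ 0 y (Fint_cont f Hf fM HfM a2 lam Hl Ha2 Hp2)).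
  rewrite <- (RInt_minus (V:=R_CompleteNormedModule)) by auto.
  rewrite <- (RInt_scal (V:=R_CompleteNormedModule)).
  2:{ apply (ex_RInt_minus (V:=R_CompleteNormedModule)); auto. }
  apply RInt_ext. intros z _. unfold scal, minus, plus, opp; simpl. unfold mult; simpl.
  unfold ker, ext. specialize (Hp1 (clamp z)). specialize (Hp2 (clamp z)).
  unfold Gf. set (GG := RInt _ 0 z). set (u := a1 (clamp z)) in *. set (v := a2 (clamp z)) in *. assert (u <> 0) by lra. assert (v <> 0) by lra. field; auto.
Qed.

Lemma ker_real g hh b1 b2 H' B1 B2 d lam Gm Hm Am : 0 < lam ->
  Rabs g <= Gm -> Rabs H' <= Hm -> lam < b1 -> lam < b2 -> lam < B1 -> lam < B2 ->
  Rabs B1 <= Am -> Rabs B2 <= Am -> Rabs (hh - H') <= d -> Rabs (b1 - B1) <= d -> Rabs (b2 - B2) <= d ->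
  0 <= d <= 1 ->
  Rabs (- (g * hh) / (b1 * b2) - - (g * H') / (B1 * B2)) <= Gm * (/ (lam * lam) + Hm * (2 * Am + 1) / (lam * lam * (lam * lam))) * d.
Proof.
  intros Hl Hg HH Hb1 Hb2 HB1 HB2 HA1 HA2 Hh Hd1 Hd2 Hd.
  assert (Hl2 : 0 < lam * lam) by nra.
  assert (HP : lam * lam <= b1 * b2) by nra.
  assert (HQ : lam * lam <= B1 * B2) by nra.
  assert (E : - (g * hh) / (b1 * b2) - - (g * H') / (B1 * B2) =
              - g * ((hh - H') / (b1 * b2) + H' * ((B1 * (B2 - b2) + b2 * (B1 - b1)) / ((b1 * b2) * (B1 * B2))))).
  { field. split; lra. }
  rewrite E. rewrite Rabs_mult, Rabs_Ropp.
  assert (Hgm : 0 <= Gm) by (eapply Rle_trans; [apply Rabs_pos|eauto]).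
  assert (Hhm : 0 <= Hm) by (eapply Rle_trans; [apply Rabs_pos|eauto]).
  assert (Ham : 0 <= Am) by (eapply Rle_trans; [apply Rabs_pos|eauto]).
  assert (T1 : Rabs ((hh - H') / (b1 * b2)) <= d / (lam * lam)).
  { unfold Rdiv. rewrite Rabs_mult, Rabs_inv, (Rabs_right (b1 * b2)) by lra.
    apply Rmult_le_compat; auto. apply Rabs_pos. left; apply Rinv_0_lt_compat; lra. apply Rinv_le_contravar; lra. }
  assert (Hb2a : Rabs b2 <= Am + 1).
  { replace b2 with ((b2 - B2) + B2) by ring. eapply Rle_trans; [apply Rabs_triang|]. lra. }
  assert (T2 : Rabs (B1 * (B2 - b2) + b2 * (B1 - b1)) <= (2 * Am + 1) * d).
  { eapply Rle_trans; [apply Rabs_triang|]. rewrite !Rabs_mult.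
    rewrite (Rabs_minus_sym B2), (Rabs_minus_sym B1).
    assert (Rabs B1 * Rabs (b2 - B2) <= Am * d) by (apply Rmult_le_compat; auto; apply Rabs_pos).
    assert (Rabs b2 * Rabs (b1 - B1) <= (Am + 1) * d) by (apply Rmult_le_compat; auto; apply Rabs_pos).
    lra. }
  assert (T3 : Rabs (H' * ((B1 * (B2 - b2) + b2 * (B1 - b1)) / ((b1 * b2) * (B1 * B2))))
               <= Hm * ((2 * Am + 1) * d / (lam * lam * (lam * lam)))).
  { rewrite Rabs_mult. apply Rmult_le_compat; auto. apply Rabs_pos. apply Rabs_pos.
    unfold Rdiv. rewrite Rabs_mult, Rabs_inv, (Rabs_right (b1 * b2 * (B1 * B2))) by nra.
    apply Rmult_le_compat; auto. apply Rabs_pos. left; apply Rinv_0_lt_compat; nra.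
    apply Rinv_le_contravar. nra. apply Rmult_le_compat; lra. }
  eapply Rle_trans. apply Rmult_le_compat; [apply Rabs_pos|apply Rabs_pos|exact Hg|].
  eapply Rle_trans; [apply Rabs_triang|]. apply Rplus_le_compat; [exact T1|exact T3].
  right. unfold Rdiv. field. lra.
Qed.

Lemma zero_ker f hh b1 b2 lam : contI f -> (forall x, 0 < f x) -> 0 < lam -> contI hh -> contI b1 -> contI b2 ->
  (forall x, lam < b1 x) -> (forall x, lam < b2 x) ->
  (forall x : I01, RInt (ker f hh b1 b2) 0 (proj1_sig x) = 0) -> forall x, hh x = 0.
Proof.
  intros Hf Hfp Hl Hh Hb1 Hb2 Hp1 Hp2 H0.
  destruct (contI_bounded f Hf) as [fM HfM].
  assert (kc := ker_cont f Hf fM HfM hh b1 b2 lam Hl Hh Hb1 Hb2 Hp1 Hp2).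
  assert (Hin : forall y0, 0 < y0 < 1 -> hh (clamp y0) = 0).
  { intros y0 Hy0.
    assert (D1 : Derive (fun y => RInt (ker f hh b1 b2) 0 y) y0 = ker f hh b1 b2 y0).
    { apply Derive_RInt. apply filter_forall. intros; apply exR; auto. auto. }
    assert (D2 : Derive (fun y => RInt (ker f hh b1 b2) 0 y) y0 = Derive (fun _ => 0) y0).
    { apply Derive_ext_loc. assert (Hep : 0 < Rmin y0 (1 - y0)) by (apply Rmin_pos; lra).
      exists (mkposreal _ Hep). intros y Hy. simpl in Hy.
      unfold ball in Hy; simpl in Hy; unfold AbsRing_ball, abs, minus, plus, opp in Hy; simpl in Hy.
      assert (Hy2 : 0 <= y <= 1).
      { revert Hy. unfold Rmin; destruct Rle_dec; unfold Rabs; destruct Rcase_abs; intros; lra. }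
      rewrite <- (clamp_val y Hy2). apply H0. }
    rewrite D1, Derive_const in D2. unfold ker in D2.
    assert (Hg := G_pos f Hf Hfp y0 (proj1 Hy0)).
    unfold ext in D2. specialize (Hp1 (clamp y0)). specialize (Hp2 (clamp y0)).
    set (u := b1 (clamp y0)) in *. set (v := b2 (clamp y0)) in *. set (G := Gf f y0) in *.
    set (w := hh (clamp y0)) in *.
    assert (E : G * w = 0).
    { replace (G * w) with (- (- (G * w) / (u * v)) * (u * v)) by (field; split; lra).
      rewrite D2. ring. }
    apply Rmult_integral in E. destruct E; [lra|auto]. }
  intros x. apply NNPP. intros Hx.
  assert (He : 0 < Rabs (hh x)) by (apply Rabs_pos_lt; auto).
  destruct (Hh x _ He) as [d [Hd Hy]].
  destruct x as [x0 Hx0]. set (t := Rmin 1 (d / 2)).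
  assert (Ht : 0 < t <= 1) by (unfold t, Rmin; destruct Rle_dec; lra).
  assert (Htd : t < d) by (unfold t, Rmin; destruct Rle_dec; lra).
  set (y0 := (1 - t) * x0 + t / 2).
  assert (Hy0 : 0 < y0 < 1) by (unfold y0; nra).
  assert (Hyd : Rabs (proj1_sig (clamp y0) - proj1_sig (exist (fun x => 0 <= x <= 1) x0 Hx0)) < d).
  { rewrite clamp_val by lra. simpl proj1_sig.
    unfold y0. replace ((1 - t) * x0 + t / 2 - x0) with (t * (1/2 - x0)) by field.
    rewrite Rabs_mult, Rabs_right by lra.
    assert (Rabs (1/2 - x0) <= 1/2) by (unfold Rabs; destruct Rcase_abs; lra). nra. }
  specialize (Hy (clamp y0) Hyd). rewrite Hin in Hy by auto.
  replace (0 - hh (exist _ x0 Hx0)) with (- hh (exist _ x0 Hx0)) in Hy by ring.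
  rewrite Rabs_Ropp in Hy. lra.
Qed.

Lemma unif_sub u U phi : unif u U -> incr phi -> unif (fun n => u (phi n)) U.
Proof.
  intros Hu Hi e He. destruct (Hu e He) as [N0 HN0]. exists N0. intros n Hn x.
  apply HN0. pose proof (incr_ge phi Hi n). lia.
Qed.

Lemma int_diff_bound (k1 k2 : R -> R) y B : (forall z, continuous k1 z) -> (forall z, continuous k2 z) ->
  0 <= y <= 1 -> (forall z, 0 <= z <= y -> Rabs (k1 z - k2 z) <= B) ->
  Rabs (RInt k1 0 y - RInt k2 0 y) <= B.
Proof.
  intros H1 H2 Hy HB.
  assert (HB0 : 0 <= B) by (eapply Rle_trans; [apply Rabs_pos| apply (HB 0); lra]).
  rewrite <- (RInt_minus (V:=R_CompleteNormedModule)) by (apply exR; auto).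
  eapply Rle_trans. apply abs_RInt_le_const. lra.
  apply (ex_RInt_minus (V:=R_CompleteNormedModule)); apply exR; auto.
  intros t Ht. apply HB. auto. nra.
Qed.

Lemma ker_bound f fM hh b1 b2 lam Hm : 0 < lam -> contI f -> (forall x, Rabs (f x) <= fM) ->
  (forall x, Rabs (hh x) <= Hm) -> (forall x, lam < b1 x) -> (forall x, lam < b2 x) ->
  forall z, 0 <= z <= 1 -> Rabs (ker f hh b1 b2 z) <= fM * Hm / (lam * lam).
Proof.
  intros Hl Hf HfM HH Hp1 Hp2 z Hz. unfold ker, ext.
  specialize (Hp1 (clamp z)). specialize (Hp2 (clamp z)). specialize (HH (clamp z)).
  assert (HG := G_bound f Hf fM HfM z Hz).
  assert (0 <= fM) by (eapply Rle_trans; [apply Rabs_pos|apply (HfM pt0)]).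
  unfold Rdiv. rewrite Rabs_mult, Rabs_Ropp, Rabs_mult, Rabs_inv, (Rabs_right (b1 (clamp z) * b2 (clamp z))) by nra.
  apply Rmult_le_compat. apply Rmult_le_pos; apply Rabs_pos. left; apply Rinv_0_lt_compat; nra.
  apply Rmult_le_compat; auto; apply Rabs_pos. apply Rinv_le_contravar; nra.
Qed.

Lemma W_ext (W : (I01 -> R) -> Prop) g h : W g -> (forall x, g x = h x) -> W h.
Proof. intros Hg E. replace h with g; auto. apply functional_extensionality; auto. Qed.

Theorem mainTheorem8
  (f : I01 -> R) (lam : R) (W K : (I01 -> R) -> Prop)
  (Q : nat -> (I01 -> R) -> (I01 -> R))
  (hf : contI f) (hfpos : forall x, 0 < f x) (hlam : 0 < lam)
  (hW : subspaceC W) (hWfd : findim W)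
  (hKW : forall a, K a -> W a) (hKH : forall a, K a -> H_lam lam a)
  (hKc : compactC K) (hKcv : convexC K)
  (hQ : forall N, bdd_finrank_op (Q N)) (hQs : strong_to_id Q) :
  exists (D : nat) (C : R), 0 < C /\
    forall a1 a2, K a1 -> K a2 ->
      supnorm (fun x => a1 x - a2 x)
        <= C * supnorm (fun x => Q D (Fop f a1) x - Q D (Fop f a2) x).
Proof.
  destruct (unif_bound Q hQ hQs) as [M0 HM0].
  set (M := Rabs M0).
  assert (HM : forall N g, contI g -> supnorm (Q N g) <= M * supnorm g).
  { intros N g Hg. eapply Rle_trans; [apply HM0; auto|]. apply Rmult_le_compat_r.
    apply sup_nonneg, contI_bounded; auto. apply Rle_abs. }
  assert (HM0p : 0 <= M) by apply Rabs_pos.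
  destruct (contI_bounded f hf) as [fM HfM].
  assert (Kc : forall a, K a -> contI a) by (intros a Ka; apply (proj1 (hKH a Ka))).
  assert (Kp : forall a, K a -> forall x, lam < a x) by (intros a Ka; apply (proj2 (hKH a Ka))).
  assert (Fc : forall a, K a -> contI (Fop f a)).
  { intros a Ka. apply (Fop_cont f hf fM HfM a lam hlam); auto. }
  destruct hW as [Wc [W0 [Wa Ws]]].
  destruct hWfd as [lW HlW].
  apply NNPP. intros Hn.
  assert (Hseq : forall N : nat, exists p : (I01 -> R) * (I01 -> R), K (fst p) /\ K (snd p) /\
     (INR N + 1) * supnorm (fun x => Q N (Fop f (fst p)) x - Q N (Fop f (snd p)) x)
       < supnorm (fun x => fst p x - snd p x)).
  { intros N. apply NNPP. intros Hn2. apply Hn. exists N, (INR N + 1). split.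
    pose proof (pos_INR N); lra.
    intros a1 a2 K1 K2. apply Rnot_lt_le. intros Hlt. apply Hn2. exists (a1, a2). simpl. auto. }
  pose (pN := fun N => proj1_sig (constructive_indefinite_description _ (Hseq N))).
  assert (HpN : forall N, K (fst (pN N)) /\ K (snd (pN N)) /\
     (INR N + 1) * supnorm (fun x => Q N (Fop f (fst (pN N))) x - Q N (Fop f (snd (pN N))) x)
       < supnorm (fun x => fst (pN N) x - snd (pN N) x)).
  { intros N. exact (proj2_sig (constructive_indefinite_description _ (Hseq N))). }
  set (a1 := fun N => fst (pN N)). set (a2 := fun N => snd (pN N)).
  assert (K1 : forall N, K (a1 N)) by (intros N; apply HpN).
  assert (K2 : forall N, K (a2 N)) by (intros N; apply HpN).
  set (dn := fun N => supnorm (fun x => a1 N x - a2 N x)).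
  assert (HQdiff : forall N, 0 <= supnorm (fun x => Q N (Fop f (a1 N)) x - Q N (Fop f (a2 N)) x)).
  { intros N. apply sup_nonneg, contI_bounded, contI_sub; apply (T_cont _ (hQ N)); apply Fc; auto. }
  assert (Hdn : forall N, (INR N + 1) * supnorm (fun x => Q N (Fop f (a1 N)) x - Q N (Fop f (a2 N)) x) < dn N).
  { intros N; apply HpN. }
  assert (Hdp : forall N, 0 < dn N).
  { intros N. specialize (Hdn N). specialize (HQdiff N). pose proof (pos_INR N). nra. }
  set (h := fun N x => / dn N * (a1 N x - a2 N x)).
  assert (Hhc : forall N, contI (h N)).
  { intros N. apply contI_scal, contI_sub; auto. }
  assert (HhW : forall N, W (h N)).
  { intros N. apply (W_ext W (fun x => / dn N * (a1 N x + (-1 * a2 N x)))).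
    apply Ws. apply Wa. apply hKW; auto. apply Ws. apply hKW; auto.
    intros x. unfold h. ring. }
  assert (Hhb : forall N x, Rabs (h N x) <= 1).
  { intros N x. unfold h. rewrite Rabs_mult, Rabs_inv, (Rabs_right (dn N)) by (specialize (Hdp N); lra).
    specialize (Hdp N). apply (Rmult_le_reg_l (dn N)); auto. rewrite <- Rmult_assoc, Rinv_r, Rmult_1_l, Rmult_1_r by lra.
    apply (sup_ge (fun x => a1 N x - a2 N x)). apply contI_bounded, contI_sub; auto. }
  assert (Hhs : forall N, supnorm (h N) = 1).
  { intros N. unfold h. rewrite sup_scal. fold (dn N). rewrite Rabs_right. apply Rinv_l.
    specialize (Hdp N); lra. left; apply Rinv_0_lt_compat; auto.
    apply contI_bounded, contI_sub; auto. }
  destruct (K_seq K a1 hKc K1) as [ps1 [A1 [Hi1 [KA1 U1]]]].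
  destruct (K_seq K (fun n => a2 (ps1 n)) hKc (fun n => K2 _)) as [ps2 [A2 [Hi2 [KA2 U2]]]].
  destruct (fd_compact lW W (fun n => h (ps1 (ps2 n))) 1) as [ps3 [H [Hi3 [HHc U3]]]].
  { split; [|split]; auto. }
  { intros g Wg. destruct (HlW g Wg) as [c Hc]. exists c. intros x; rewrite Hc; reflexivity. }
  { intros n; apply HhW. }
  { intros n x; apply Hhb. }
  set (psi := fun n => ps1 (ps2 (ps3 n))).
  assert (Hi : incr psi) by (unfold psi; apply (incr_comp ps1 (fun n => ps2 (ps3 n))); [exact Hi1| apply incr_comp; auto]).
  assert (U1' : unif (fun n => a1 (psi n)) A1).
  { apply (unif_sub (fun n => a1 (ps1 n)) A1 (fun n => ps2 (ps3 n))); [exact U1| apply incr_comp; auto]. }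
  assert (U2' : unif (fun n => a2 (psi n)) A2).
  { apply (unif_sub (fun n => a2 (ps1 (ps2 n))) A2 ps3); [exact U2|exact Hi3]. }
  assert (U3' : unif (fun n => h (psi n)) H) by exact U3.
  assert (HHnz : ~ (forall x, H x = 0)).
  { intros Hz. destruct (U3' (1/2)) as [N0 HN0]; [lra|].
    assert (supnorm (h (psi N0)) <= 1/2).
    { apply sup_le. intros x. specialize (HN0 N0 (le_n _) x). rewrite Hz, Rminus_0_r in HN0. exact HN0. }
    rewrite Hhs in H0. lra. }
  destruct (contI_bounded H HHc) as [Hm HHm].
  destruct (contI_bounded A1 (Kc _ KA1)) as [Am1 HAm1].
  destruct (contI_bounded A2 (Kc _ KA2)) as [Am2 HAm2].
  set (Am := Rmax Am1 Am2).
  assert (HA1m : forall x, Rabs (A1 x) <= Am) by (intros x; eapply Rle_trans; [apply HAm1| apply Rmax_l]).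
  assert (HA2m : forall x, Rabs (A2 x) <= Am) by (intros x; eapply Rle_trans; [apply HAm2| apply Rmax_r]).
  assert (Hm0 : 0 <= Hm) by (eapply Rle_trans; [apply Rabs_pos| apply (HHm pt0)]).
  assert (Am0 : 0 <= Am) by (eapply Rle_trans; [apply Rabs_pos| apply (HA1m pt0)]).
  assert (fM0 : 0 <= fM) by (eapply Rle_trans; [apply Rabs_pos| apply (HfM pt0)]).
  set (s := fun N (x : I01) => RInt (ker f (h N) (a1 N) (a2 N)) 0 (proj1_sig x)).
  assert (Hs_eq : forall N x, s N x = / dn N * (Fop f (a1 N) x - Fop f (a2 N) x)).
  { intros N x. unfold s. symmetry. apply (diff_formula f (a1 N) (a2 N) lam); auto. }
  assert (HF12 : forall N, contI (fun x => Fop f (a1 N) x - Fop f (a2 N) x)).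
  { intros N. apply contI_sub; apply Fc; auto. }
  assert (Hsc : forall N, contI (s N)).
  { intros N. apply (contI_ext (fun x => / dn N * (Fop f (a1 N) x - Fop f (a2 N) x))).
    intros x; rewrite Hs_eq; auto. apply contI_scal; auto. }
  set (Sf := fun x : I01 => RInt (ker f H A1 A2) 0 (proj1_sig x)).
  assert (HSc : contI Sf).
  { apply (contI_RInt _ (fM * Hm / (lam * lam))).
    apply (ker_cont f hf fM HfM H A1 A2 lam); auto.
    apply (ker_bound f fM H A1 A2 lam Hm); auto. }
  assert (HQsmall : forall N, supnorm (Q N (s N)) < / INR (S N)).
  { intros N.
    rewrite (T_eq (Q N) (s N) (fun x => / dn N * (Fop f (a1 N) x - Fop f (a2 N) x))) by auto.
    rewrite (sup_eq _ (fun x => / dn N * (Q N (Fop f (a1 N)) x - Q N (Fop f (a2 N)) x))).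
    2:{ intros x. rewrite (T_scal _ (hQ N)) by auto. rewrite (T_sub _ (hQ N)) by (apply Fc; auto). reflexivity. }
    rewrite sup_scal by (apply contI_bounded, contI_sub; apply (T_cont _ (hQ N)); apply Fc; auto).
    specialize (Hdp N). specialize (Hdn N). rewrite Rabs_right by (left; apply Rinv_0_lt_compat; auto).
    rewrite S_INR. pose proof (pos_INR N).
    set (X := supnorm (fun x => Q N (Fop f (a1 N)) x - Q N (Fop f (a2 N)) x)) in *.
    apply (Rmult_lt_reg_l (dn N)); auto. rewrite <- Rmult_assoc, Rinv_r, Rmult_1_l by lra.
    apply (Rmult_lt_reg_l (INR N + 1)); [lra|].
    replace ((INR N + 1) * (dn N * / (INR N + 1))) with (dn N) by (field; lra). exact Hdn. }
  set (Cst := fM * (/ (lam * lam) + Hm * (2 * Am + 1) / (lam * lam * (lam * lam)))).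
  assert (HCst : 0 <= Cst).
  { unfold Cst. apply Rmult_le_pos; auto. assert (0 < lam * lam) by nra.
    apply Rplus_le_le_0_compat. left; apply Rinv_0_lt_compat; auto.
    unfold Rdiv. apply Rmult_le_pos. apply Rmult_le_pos; lra. left; apply Rinv_0_lt_compat; nra. }
  assert (Hconv : unif (fun n => s (psi n)) Sf).
  { intros e He. set (d := Rmin 1 (e / (Cst + 1))).
    assert (Hd : 0 < d <= 1).
    { unfold d, Rmin; destruct Rle_dec; split; try lra. apply Rdiv_lt_0_compat; lra. }
    assert (HCd : Cst * d <= e).
    { apply Rle_trans with (Cst * (e / (Cst + 1))). apply Rmult_le_compat_l; auto. apply Rmin_r.
      apply Rle_trans with ((Cst + 1) * (e / (Cst + 1))). apply Rmult_le_compat_r. left; apply Rdiv_lt_0_compat; lra. lra.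
      right; field; lra. }
    destruct (U1' d (proj1 Hd)) as [N1 HN1]. destruct (U2' d (proj1 Hd)) as [N2 HN2].
    destruct (U3' d (proj1 Hd)) as [N3 HN3].
    exists (max N1 (max N2 N3)). intros n Hnn x. eapply Rle_trans; [|exact HCd].
    unfold s, Sf. apply int_diff_bound.
    - apply (ker_cont f hf fM HfM _ _ _ lam); auto.
    - apply (ker_cont f hf fM HfM _ _ _ lam); auto.
    - apply (proj2_sig x).
    - intros z Hz. assert (Hz1 : 0 <= z <= 1) by (pose proof (proj2_sig x); simpl in *; lra).
      unfold ker, ext.
      apply (ker_real _ _ _ _ _ _ _ d lam fM Hm Am hlam).
      + apply G_bound; auto.
      + apply HHm.
      + apply Kp; auto.
      + apply Kp; auto.
      + apply Kp; auto.
      + apply Kp; auto.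
      + apply HA1m.
      + apply HA2m.
      + apply HN3; lia.
      + apply HN1; lia.
      + apply HN2; lia.
      + lra. }
  assert (HS0 : forall x, Sf x = 0).
  { intros x. apply NNPP. intros Hx. assert (Hep : 0 < Rabs (Sf x)) by (apply Rabs_pos_lt; auto).
    set (ep := Rabs (Sf x)).
    assert (H1 := hQs Sf HSc). apply is_lim_seq_spec in H1.
    destruct (H1 (mkposreal (ep / 3) ltac:(unfold ep; lra))) as [N1 HN1]. simpl in HN1.
    assert (Hep3 : 0 < ep / (3 * (M + 1))) by (apply Rdiv_lt_0_compat; [unfold ep; lra| lra]).
    destruct (Hconv _ Hep3) as [N2 HN2].
    assert (Hep4 : 0 < ep / 3) by (unfold ep; lra).
    destruct (inv_small _ Hep4) as [N3 HN3].
    set (n := max N1 (max N2 N3)). set (N := psi n).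
    assert (HnN : (n <= N)%nat) by (apply incr_ge; auto).
    assert (A : Rabs (Sf x - Q N Sf x) < ep / 3).
    { specialize (HN1 N ltac:(unfold n in HnN; lia)). rewrite Rminus_0_r in HN1.
      eapply Rle_lt_trans; [|eapply Rle_lt_trans; [apply Rle_abs|exact HN1]].
      rewrite Rabs_minus_sym. apply (sup_ge (fun x => Q N Sf x - Sf x)).
      apply contI_bounded, contI_sub; auto. apply (T_cont _ (hQ N)); auto. }
    assert (B : Rabs (Q N (s N) x) < ep / 3).
    { eapply Rle_lt_trans. apply sup_ge. apply contI_bounded, (T_cont _ (hQ N)); auto.
      eapply Rlt_trans. apply HQsmall. apply HN3. unfold n in HnN; lia. }
    assert (C : Rabs (Q N (fun y => Sf y - s N y) x) <= ep / 3).
    { eapply Rle_trans. apply sup_ge. apply contI_bounded, (T_cont _ (hQ N)), contI_sub; auto.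
      eapply Rle_trans. apply HM. apply contI_sub; auto.
      apply Rle_trans with (M * (ep / (3 * (M + 1)))).
      apply Rmult_le_compat_l; auto. apply sup_le. intros y.
      rewrite Rabs_minus_sym. apply (HN2 n). unfold n; lia.
      apply Rle_trans with ((M + 1) * (ep / (3 * (M + 1)))).
      apply Rmult_le_compat_r. left; apply Rdiv_lt_0_compat; lra. lra.
      right; field; lra. }
    rewrite (T_sub _ (hQ N)) in C by auto.
    assert (ep <= Rabs (Sf x - Q N Sf x) + Rabs (Q N (s N) x) + Rabs (Q N Sf x - Q N (s N) x)).
    { unfold ep. replace (Sf x) with ((Sf x - Q N Sf x) + Q N (s N) x + (Q N Sf x - Q N (s N) x)) at 1 by ring.
      eapply Rle_trans; [apply Rabs_triang|]. apply Rplus_le_compat_r. apply Rabs_triang. }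
    lra. }
  apply HHnz. apply (zero_ker f H A1 A2 lam); auto.
Qed.
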